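(* Let $\Pi\subset\mathbb R^2$ be a convex quadrilateral with counterclockwise extreme points $\mathbf v_1,\dots,\mathbf v_4$. For $\mathbf x\in\Pi$ let $D(\mathbf x)=\big(q(\mathbf x,\mathbf v_i)-w(\mathbf x,\mathbf v_i)\big)_{i=1}^{3}\in\mathbb R^3$ be the G$-$W discrepancy vector. Then any two non-zero vectors $D(\mathbf x),D(\mathbf y)$ ($\mathbf x,\mathbf y\in\Pi$) are parallel.
   Context: Gibbs coordinates $q(\mathbf x,\mathbf v_i)$: the unique probability distribution on the vertices with $\sum_iq(\mathbf x,\mathbf v_i)\mathbf v_i=\mathbf x$ maximizing the entropy $-\sum_i q\log q$ ($0\log0=0$). Wachspress coordinates: with $A(\mathbf p,\mathbf q,\mathbf r)=\tfrac12\det[\mathbf q-\mathbf p,\mathbf r-\mathbf p]$ and indices mod $4$, for interior $\mathbf x$, $w_i(\mathbf x)=A(\mathbf v_{i-1},\mathbf v_i,\mathbf v_{i+1})/(A(\mathbf v_{i-1},\mathbf v_i,\mathbf x)A(\mathbf x,\mathbf v_i,\mathbf v_{i+1}))$ and $w(\mathbf x,\mathbf v_i)=w_i(\mathbf x)/\sum_jw_j(\mathbf x)$; on an edge $[\mathbf v_j,\mathbf v_{j+1}]$ they are the barycentric coordinates with respect to $\mathbf v_j,\mathbf v_{j+1}$ and $0$ elsewhere. *)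

(* Defs.v *)
From HB Require Import structures.
From mathcomp Require Import all_boot all_order all_algebra.
From mathcomp Require Import all_classical all_reals all_analysis.
Set Implicit Arguments. Unset Strict Implicit. Unset Printing Implicit Defensive.
Import Order.TTheory GRing.Theory Num.Theory.
Local Open Scope ring_scope.

Section Quad.
Variable R : realType.
Notation pt := (R * R)%type.

Definition area (p q r : pt) : R :=
  ((q.1 - p.1) * (r.2 - p.2) - (q.2 - p.2) * (r.1 - p.1)) / 2.

Definition nxt (i : 'I_4) : 'I_4 := ordS i.
Definition prv (i : 'I_4) : 'I_4 := ord_pred i.

(* v_1..v_4 are the extreme points of a convex quadrilateral, listed
   counterclockwise: every other vertex lies strictly to the left of each
   directed edge v_i -> v_{i+1}. *)
Definition ccw_convex_quad (V : 'I_4 -> pt) : Prop :=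
  forall i j : 'I_4, j != i -> j != nxt i -> 0 < area (V i) (V (nxt i)) (V j).

Definition prob4 (l : 'I_4 -> R) : Prop :=
  (forall i, 0 <= l i) /\ \sum_i l i = 1.

Definition bary (V : 'I_4 -> pt) (l : 'I_4 -> R) (x : pt) : Prop :=
  \sum_i l i * (V i).1 = x.1 /\ \sum_i l i * (V i).2 = x.2.

Definition in_poly (V : 'I_4 -> pt) (x : pt) : Prop :=
  exists l, prob4 l /\ bary V l x.

Definition xlnx (t : R) : R := if t == 0 then 0 else t * ln t.
Definition entropy (l : 'I_4 -> R) : R := - \sum_i xlnx (l i).

(* q are the Gibbs coordinates of x: the probability distribution on the
   vertices with barycenter x maximizing the entropy (it is unique). *)
Definition is_gibbs (V : 'I_4 -> pt) (x : pt) (q : 'I_4 -> R) : Prop :=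
  prob4 q /\ bary V q x /\
  forall p, prob4 p -> bary V p x -> entropy p <= entropy q.

Definition in_interior (V : 'I_4 -> pt) (x : pt) : Prop :=
  forall i : 'I_4, 0 < area (V i) (V (nxt i)) x.

Definition wach_w (V : 'I_4 -> pt) (x : pt) (i : 'I_4) : R :=
  area (V (prv i)) (V i) (V (nxt i)) /
  (area (V (prv i)) (V i) x * area x (V i) (V (nxt i))).

Definition is_wachspress (V : 'I_4 -> pt) (x : pt) (w : 'I_4 -> R) : Prop :=
  (in_interior V x ->
     forall i, w i = wach_w V x i / \sum_j wach_w V x j) /\
  (forall (j : 'I_4) (t : R), 0 <= t <= 1 ->
     x = ((1 - t) * (V j).1 + t * (V (nxt j)).1,
          (1 - t) * (V j).2 + t * (V (nxt j)).2) ->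
     forall i, w i = (if i == j then 1 - t else 0)
                     + (if i == nxt j then t else 0)).

Definition discrepancy (q w : 'I_4 -> R) : 'rV[R]_3 :=
  \row_(i < 3) (q (widen_ord (leqnSn 3) i) - w (widen_ord (leqnSn 3) i)).

End Quad.

(* Main.v *)
Require Import Defs.
From HB Require Import structures.
From mathcomp Require Import all_boot all_order all_algebra.
From mathcomp Require Import all_classical all_reals all_analysis.
From mathcomp Require Import ring lra.
Import Order.TTheory GRing.Theory Num.Theory.
Local Open Scope ring_scope.
Set Implicit Arguments. Unset Strict Implicit.

Definition o0 : 'I_4 := @Ordinal 4 0 isT.
Definition o1 : 'I_4 := @Ordinal 4 1 isT.
Definition o2 : 'I_4 := @Ordinal 4 2 isT.
Definition o3 : 'I_4 := @Ordinal 4 3 isT.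

Lemma ord4P (i : 'I_4) : [\/ i = o0, i = o1, i = o2 | i = o3].
Proof.
case: i => [[|[|[|[|n]]]] Hi].
- by apply: Or41; apply/val_inj.
- by apply: Or42; apply/val_inj.
- by apply: Or43; apply/val_inj.
- by apply: Or44; apply/val_inj.
- by [].
Qed.

Lemma sum4 (R : realType) (F : 'I_4 -> R) : \sum_i F i = F o0 + F o1 + F o2 + F o3.
Proof.
rewrite !big_ord_recr big_ord0 /= -[F o0]add0r.
by congr (_ + _ + _ + _ + _); congr (F _); apply/val_inj.
Qed.

Lemma nxt0 : nxt o0 = o1. Proof. by apply/val_inj. Qed.
Lemma nxt1 : nxt o1 = o2. Proof. by apply/val_inj. Qed.
Lemma nxt2 : nxt o2 = o3. Proof. by apply/val_inj. Qed.
Lemma nxt3 : nxt o3 = o0. Proof. by apply/val_inj. Qed.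
Lemma prv0 : prv o0 = o3. Proof. by apply/val_inj. Qed.
Lemma prv1 : prv o1 = o0. Proof. by apply/val_inj. Qed.
Lemma prv2 : prv o2 = o1. Proof. by apply/val_inj. Qed.
Lemma prv3 : prv o3 = o2. Proof. by apply/val_inj. Qed.

Lemma wach_poly (R : realType) (a0 b0 a1 b1 a2 b2 a3 b3 x1 x2 : R) :
  let V0 := (a0, b0) in let V1 := (a1, b1) in let V2 := (a2,b2) in let V3 := (a3,b3) in
  let x := (x1, x2) in
  let A0 := area V0 V1 x in let A1 := area V1 V2 x in
  let A2 := area V2 V3 x in let A3 := area V3 V0 x in
  area V3 V0 V1 * A1 * A2 * (a0 - x1) + area V0 V1 V2 * A2 * A3 * (a1 - x1)
  + area V1 V2 V3 * A3 * A0 * (a2 - x1) + area V2 V3 V0 * A0 * A1 * (a3 - x1) = 0 /\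
  area V3 V0 V1 * A1 * A2 * (b0 - x2) + area V0 V1 V2 * A2 * A3 * (b1 - x2)
  + area V1 V2 V3 * A3 * A0 * (b2 - x2) + area V2 V3 V0 * A0 * A1 * (b3 - x2) = 0.
Proof. rewrite /area /=; split; ring. Qed.

Section S.
Variable R : realType.
Implicit Types (V : 'I_4 -> (R * R)%type) (p q x : (R * R)%type).

Lemma area_pp p q : area p q p = 0. Proof. case: p => [p1 p2]; case: q => [q1 q2]; rewrite /area /=; ring. Qed.
Lemma area_pq p q : area p q q = 0. Proof. case: p => [p1 p2]; case: q => [q1 q2]; rewrite /area /=; ring. Qed.
Lemma area_rot x p q : area x p q = area p q x. Proof. case: x => [x1 x2]; case: p => [p1 p2]; case: q => [q1 q2]; rewrite /area /=; ring. Qed.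

Lemma area_lin V (l : 'I_4 -> R) x p q : prob4 l -> bary V l x ->
  area p q x = \sum_i l i * area p q (V i).
Proof.
case=> _ Hs [H1 H2]; rewrite sum4 in Hs; rewrite sum4 in H1; rewrite sum4 in H2; rewrite sum4.
case: x H1 H2 => x1 x2 /= H1 H2.
have E : l o3 = 1 - l o0 - l o1 - l o2 by rewrite -Hs; ring.
rewrite -H1 -H2 /area E.
case: p => [p1 p2]; case: q => [q1 q2]; case: (V o0) => [a0 b0]; case: (V o1) => [a1 b1];
case: (V o2) => [a2 b2]; case: (V o3) => [a3 b3] /=; ring.
Qed.

Lemma edge_case V x w (l : 'I_4 -> R) k : ccw_convex_quad V -> prob4 l -> bary V l x ->
  is_wachspress V x w -> area (V k) (V (nxt k)) x <= 0 -> forall i, w i = l i.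
Proof.
move=> Hc Hl Hb [_ Hw] Hk.
have Hlin := @area_lin V l x (V k) (V (nxt k)) Hl Hb.
have Hl0 : forall i, 0 <= l i by case: Hl.
have Hnn : forall i, 0 <= l i * area (V k) (V (nxt k)) (V i).
  move=> i; apply: mulr_ge0 => //.
  case: (eqVneq i k) => [->|ik]; first by rewrite area_pp.
  case: (eqVneq i (nxt k)) => [->|ink]; first by rewrite area_pq.
  exact: ltW (Hc k i ik ink).
have Hsum0 : \sum_i l i * area (V k) (V (nxt k)) (V i) == 0.
  by rewrite eq_le -Hlin Hk /= Hlin; apply: sumr_ge0 => i _.
have Hz := psumr_eq0P (fun i _ => Hnn i) (eqP Hsum0).
have Hlz : forall j, j != k -> j != nxt k -> l j = 0.
  move=> j jk jn; have := Hz j isT; move/eqP.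
  by rewrite mulf_eq0 (gt_eqF (Hc k j jk jn)) orbF => /eqP.
have Hnk : nxt k != k by case: (ord4P k) => ->.
have Hsplit : forall F : 'I_4 -> R, \sum_i l i * F i = l k * F k + l (nxt k) * F (nxt k).
  move=> F; rewrite (bigD1 k) //= (bigD1 (nxt k)) /=; last by rewrite Hnk.
  rewrite big1 ?addr0 // => j /andP [jk jn]; by rewrite Hlz ?mul0r.
have Hs1 : l k + l (nxt k) = 1.
  case: Hl => _ <-; have := Hsplit (fun _ => 1); rewrite !mulr1 => <-.
  by apply: eq_bigr => i _; rewrite mulr1.
case: Hb; rewrite !Hsplit => H1 H2.
have := Hw k (l (nxt k)).
have Ht : 0 <= l (nxt k) <= 1.
  by rewrite Hl0 /=; have := Hl0 k; rewrite -Hs1 => h; rewrite lerDr.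
have Ex : x = ((1 - l (nxt k)) * (V k).1 + l (nxt k) * (V (nxt k)).1,
               (1 - l (nxt k)) * (V k).2 + l (nxt k) * (V (nxt k)).2).
  have -> : 1 - l (nxt k) = l k by rewrite -Hs1 addrK.
  by rewrite H1 H2; case: x {H1 H2 Hlin Hk Hw}.
move=> /(_ Ht Ex) Hw' i; rewrite Hw'.
case: (eqVneq i k) => [->|ik].
  by rewrite eq_sym (negbTE Hnk) addr0 -Hs1 addrK.
case: (eqVneq i (nxt k)) => [->|ink]; first by rewrite add0r.
by rewrite addr0 Hlz.
Qed.

Lemma key_frac (A0 A1 A2 A3 C0 C1 C2 C3 d0 d1 d2 d3 : R) :
  A0 != 0 -> A1 != 0 -> A2 != 0 -> A3 != 0 ->
  C0*A1*A2*d0 + C1*A2*A3*d1 + C2*A3*A0*d2 + C3*A0*A1*d3 = 0 ->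
  C0/(A3*A0)*d0 + C1/(A0*A1)*d1 + C2/(A1*A2)*d2 + C3/(A2*A3)*d3 = 0.
Proof.
move=> h0 h1 h2 h3 H.
have -> : C0/(A3*A0)*d0 + C1/(A0*A1)*d1 + C2/(A1*A2)*d2 + C3/(A2*A3)*d3 =
  (C0*A1*A2*d0 + C1*A2*A3*d1 + C2*A3*A0*d2 + C3*A0*A1*d3) / (A0*A1*A2*A3).
  by field; rewrite h0 h1 h2 h3.
by rewrite H mul0r.
Qed.

Lemma norm_frac (W0 W1 W2 W3 a0 a1 a2 a3 x : R) :
  W0 + W1 + W2 + W3 != 0 ->
  W0 * (a0 - x) + W1 * (a1 - x) + W2 * (a2 - x) + W3 * (a3 - x) = 0 ->
  W0 / (W0 + W1 + W2 + W3) * a0 + W1 / (W0 + W1 + W2 + W3) * a1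
  + W2 / (W0 + W1 + W2 + W3) * a2 + W3 / (W0 + W1 + W2 + W3) * a3 = x.
Proof.
move=> hS H; apply/eqP; rewrite -subr_eq0.
have -> : W0 / (W0 + W1 + W2 + W3) * a0 + W1 / (W0 + W1 + W2 + W3) * a1
  + W2 / (W0 + W1 + W2 + W3) * a2 + W3 / (W0 + W1 + W2 + W3) * a3 - x =
  (W0 * (a0 - x) + W1 * (a1 - x) + W2 * (a2 - x) + W3 * (a3 - x)) / (W0 + W1 + W2 + W3).
  by field.
by rewrite H mul0r.
Qed.


Lemma wach_polyP (V0 V1 V2 V3 x : (R * R)%type) :
  let A0 := area V0 V1 x in let A1 := area V1 V2 x in
  let A2 := area V2 V3 x in let A3 := area V3 V0 x in
  area V3 V0 V1 * A1 * A2 * (V0.1 - x.1) + area V0 V1 V2 * A2 * A3 * (V1.1 - x.1)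
  + area V1 V2 V3 * A3 * A0 * (V2.1 - x.1) + area V2 V3 V0 * A0 * A1 * (V3.1 - x.1) = 0 /\
  area V3 V0 V1 * A1 * A2 * (V0.2 - x.2) + area V0 V1 V2 * A2 * A3 * (V1.2 - x.2)
  + area V1 V2 V3 * A3 * A0 * (V2.2 - x.2) + area V2 V3 V0 * A0 * A1 * (V3.2 - x.2) = 0.
Proof.
case: V0 => a0 b0; case: V1 => a1 b1; case: V2 => a2 b2; case: V3 => a3 b3; case: x => x1 x2.
exact: wach_poly.
Qed.

Lemma wach_ok V (x : (R * R)%type) w : ccw_convex_quad V -> in_poly V x -> is_wachspress V x w ->
  \sum_i w i = 1 /\ bary V w x.
Proof.
move=> Hc [l [Hl Hb]] Hw.
have [Hall|Hnot] := boolP [forall i, 0 < area (V i) (V (nxt i)) x]; last first.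
  move: Hnot; rewrite negb_forall => /existsP [k]; rewrite -leNgt => Hk.
  have E := edge_case Hc Hl Hb Hw Hk.
  split; first by case: Hl => _ <-; apply: eq_bigr => i _; rewrite E.
  by case: Hb => H1 H2; split; [rewrite -H1 | rewrite -H2]; apply: eq_bigr => i _; rewrite E.
have HA : forall i, 0 < area (V i) (V (nxt i)) x by move=> i; exact: (forallP Hall i).
have Ew := Hw.1 HA.
have Hnp : forall i, nxt (prv i) = i by move=> i; case: (ord4P i) => ->; apply/val_inj.
have HW : forall i, 0 < wach_w V x i.
  move=> i; rewrite /wach_w (area_rot x); apply: divr_gt0; last apply: mulr_gt0; last exact: HA.
  - have := Hc (prv i) (nxt i); rewrite Hnp; apply; case: (ord4P i) => -> //.
  - by have := HA (prv i); rewrite Hnp.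
have HS : 0 < \sum_j wach_w V x j by rewrite sum4 !addr_gt0.
split.
  rewrite (eq_bigr _ (fun i _ => Ew i)) -mulr_suml mulfV //; exact: lt0r_neq0.
have A0 := HA o0; have A1 := HA o1; have A2 := HA o2; have A3 := HA o3.
rewrite ?nxt0 ?nxt1 ?nxt2 ?nxt3 in A0 A1 A2 A3.
have HS' := lt0r_neq0 HS; rewrite sum4 in HS'.
split; rewrite sum4 !Ew sum4; apply: norm_frac => //;
  rewrite /wach_w ?nxt0 ?nxt1 ?nxt2 ?nxt3 ?prv0 ?prv1 ?prv2 ?prv3 !(area_rot x);
  (apply: key_frac; [exact: lt0r_neq0 A0|exact: lt0r_neq0 A1|exact: lt0r_neq0 A2|exact: lt0r_neq0 A3|]);
  [exact: (wach_polyP (V o0) (V o1) (V o2) (V o3) x).1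
  |exact: (wach_polyP (V o0) (V o1) (V o2) (V o3) x).2].
Qed.

Lemma cramer (D a0 b0 a1 b1 a2 b2 a3 b3 d0 d1 d2 d3 : R) :
 D = (a1-a0)*(b2-b0) - (a2-a0)*(b1-b0) ->
 d0+d1+d2+d3 = 0 -> d0*a0+d1*a1+d2*a2+d3*a3 = 0 -> d0*b0+d1*b1+d2*b2+d3*b3 = 0 ->
 [/\ D*d0 = -d3*((a1*b2 - a2*b1) + (b1 - b2)*a3 + (a2 - a1)*b3),
     D*d1 = -d3*(-(a0*b2 - a2*b0) + (b2 - b0)*a3 - (a2 - a0)*b3) &
     D*d2 = -d3*((a0*b1 - a1*b0) - (b1-b0)*a3 + (a1 - a0)*b3)].
Proof.
move=> HD E1 E2 E3; split; apply/eqP; rewrite -subr_eq0; apply/eqP.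
- transitivity ((a1*b2 - a2*b1)*(d0+d1+d2+d3) + (b1-b2)*(d0*a0+d1*a1+d2*a2+d3*a3)
     + (a2-a1)*(d0*b0+d1*b1+d2*b2+d3*b3)); first by rewrite HD; ring.
  by rewrite E1 E2 E3; ring.
- transitivity ((-(a0*b2 - a2*b0))*(d0+d1+d2+d3) + (b2-b0)*(d0*a0+d1*a1+d2*a2+d3*a3)
     - (a2-a0)*(d0*b0+d1*b1+d2*b2+d3*b3)); first by rewrite HD; ring.
  by rewrite E1 E2 E3; ring.
- transitivity ((a0*b1 - a1*b0)*(d0+d1+d2+d3) - (b1-b0)*(d0*a0+d1*a1+d2*a2+d3*a3)
     + (a1-a0)*(d0*b0+d1*b1+d2*b2+d3*b3)); first by rewrite HD; ring.
  by rewrite E1 E2 E3; ring.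
Qed.

Lemma disc_ext (q w q' w' : 'I_4 -> R) c :
  q o0 - w o0 = c * (q' o0 - w' o0) -> q o1 - w o1 = c * (q' o1 - w' o1) ->
  q o2 - w o2 = c * (q' o2 - w' o2) -> discrepancy q w = c *: discrepancy q' w'.
Proof.
move=> h0 h1 h2; apply/rowP => i; rewrite !mxE.
case: i => [[|[|[|n]]] Hi] //.
- by have -> : widen_ord (leqnSn 3) (Ordinal Hi) = o0 by apply/val_inj.
- by have -> : widen_ord (leqnSn 3) (Ordinal Hi) = o1 by apply/val_inj.
- by have -> : widen_ord (leqnSn 3) (Ordinal Hi) = o2 by apply/val_inj.
Qed.

Lemma kern V (q w : 'I_4 -> R) z : prob4 q -> bary V q z -> \sum_i w i = 1 -> bary V w z ->
  [/\ (q o0 - w o0) + (q o1 - w o1) + (q o2 - w o2) + (q o3 - w o3) = 0,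
      (q o0 - w o0) * (V o0).1 + (q o1 - w o1) * (V o1).1 + (q o2 - w o2) * (V o2).1
        + (q o3 - w o3) * (V o3).1 = 0 &
      (q o0 - w o0) * (V o0).2 + (q o1 - w o1) * (V o1).2 + (q o2 - w o2) * (V o2).2
        + (q o3 - w o3) * (V o3).2 = 0].
Proof.
move=> [_ Sq] [Bq1 Bq2] Sw [Bw1 Bw2].
rewrite sum4 in Sq; rewrite sum4 in Sw; rewrite sum4 in Bq1; rewrite sum4 in Bq2;
rewrite sum4 in Bw1; rewrite sum4 in Bw2.
split.
- transitivity ((q o0 + q o1 + q o2 + q o3) - (w o0 + w o1 + w o2 + w o3)); first by ring.
  by rewrite Sq Sw subrr.
- transitivity ((q o0 * (V o0).1 + q o1 * (V o1).1 + q o2 * (V o2).1 + q o3 * (V o3).1)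
    - (w o0 * (V o0).1 + w o1 * (V o1).1 + w o2 * (V o2).1 + w o3 * (V o3).1)); first by ring.
  by rewrite Bq1 Bw1 subrr.
- transitivity ((q o0 * (V o0).2 + q o1 * (V o1).2 + q o2 * (V o2).2 + q o3 * (V o3).2)
    - (w o0 * (V o0).2 + w o1 * (V o1).2 + w o2 * (V o2).2 + w o3 * (V o3).2)); first by ring.
  by rewrite Bq2 Bw2 subrr.
Qed.

End S.

Unset Implicit Arguments.
Theorem corollary5p9 (R : realType) (V : 'I_4 -> (R * R)%type) :
  ccw_convex_quad V ->
  forall (x y : (R * R)%type) (qx wx qy wy : 'I_4 -> R),
    in_poly V x -> in_poly V y ->
    is_gibbs V x qx -> is_wachspress V x wx ->
    is_gibbs V y qy -> is_wachspress V y wy ->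
    discrepancy qx wx != 0 -> discrepancy qy wy != 0 ->
    exists c : R, discrepancy qx wx = c *: discrepancy qy wy.
Proof.
move=> Hc x y qx wx qy wy Px Py [Gx [Bx _]] Wx [Gy [By _]] Wy nx ny.
have [Sx BWx] := wach_ok Hc Px Wx.
have [Sy BWy] := wach_ok Hc Py Wy.
have [Kx1 Kx2 Kx3] := kern Gx Bx Sx BWx.
have [Ky1 Ky2 Ky3] := kern Gy By Sy BWy.
have [D HD] : exists D, D = ((V o1).1 - (V o0).1) * ((V o2).2 - (V o0).2)
   - ((V o2).1 - (V o0).1) * ((V o1).2 - (V o0).2) by eexists.
have [X0 X1 X2] := cramer HD Kx1 Kx2 Kx3.
have [Y0 Y1 Y2] := cramer HD Ky1 Ky2 Ky3.
have hD : D != 0.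
  have := Hc o0 o2 isT isT; rewrite nxt0 => h.
  have -> : D = 2 * area (V o0) (V o1) (V o2) by rewrite HD /area; field.
  by rewrite mulf_neq0 // lt0r_neq0.
have hy3 : qy o3 - wy o3 != 0.
  apply: contra ny => /eqP h3.
  rewrite (@disc_ext _ _ _ qy wy 0) ?scale0r //; rewrite mul0r;
  apply: (mulfI hD); rewrite mulr0.
  - by rewrite Y0 h3 oppr0 !mul0r.
  - by rewrite Y1 h3 oppr0 !mul0r.
  - by rewrite Y2 h3 oppr0 !mul0r.
exists ((qx o3 - wx o3) / (qy o3 - wy o3)).
apply: disc_ext; apply: (mulfI hD); rewrite mulrCA.
- by rewrite X0 Y0; field.
- by rewrite X1 Y1; field.
- by rewrite X2 Y2; field.
Qed.
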